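(* Let $P(\lambda)=\sum_{j=0}^m A_j\lambda^j$ and $\Delta(\lambda)=\sum_{j=0}^m\Delta_j\lambda^j$ be $n\times n$ complex matrix polynomials, and let $\mu_1\neq\mu_2$ be complex numbers. If $\mu_1$ and $\mu_2$ are both eigenvalues of $Q(\lambda)=P(\lambda)+\Delta(\lambda)$, then for every $\gamma\neq 0$, $$ s_{2n-1}\big(F[P(\mu_1,\mu_2);\gamma]\big)\le \big\|F[\Delta(\mu_1,\mu_2);\gamma]\big\|. $$
   Context: For an $n\times n$ matrix polynomial $R(\lambda)$, distinct $\mu_1,\mu_2\in\mathbb{C}$ and $\gamma\in\mathbb{C}$, define the divided difference $R[\mu_1,\mu_2]=\frac{R(\mu_1)-R(\mu_2)}{\mu_1-\mu_2}$ and the $2n\times 2n$ matrix $F[R(\mu_1,\mu_2);\gamma]=\begin{bmatrix} R(\mu_1) & 0\\ \gamma R[\mu_1,\mu_2] & R(\mu_2)\end{bmatrix}$. For a matrix $M\in\mathbb{C}^{2n\times 2n}$, $s_1(M)\ge s_2(M)\ge\dots\ge s_{2n}(M)$ denote its singular values, so $s_{2n-1}$ is the second smallest. $\|\cdot\|$ is the spectral norm. A scalar $\lambda_0$ is an eigenvalue of a matrix polynomial $Q$ if $Q(\lambda_0)x=0$ for some nonzero $x\in\mathbb{C}^n$. *)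

(* Defs.v *)
From HB Require Import structures.
From mathcomp Require Import all_boot all_order all_algebra.
Set Implicit Arguments. Unset Strict Implicit. Unset Printing Implicit Defensive.
Import Order.TTheory GRing.Theory Num.Theory.
Local Open Scope ring_scope.

(* Scalars range over an arbitrary numClosedFieldType C
   (e.g. the complex numbers R[i]); conjugation is Num.conj. *)

Section Defs.
Variable C : numClosedFieldType.

Definition adjmx (p q : nat) (M : 'M[C]_(p, q)) : 'M[C]_(q, p) :=
  (map_mx Num.conj M)^T.

Definition eigvals (N : nat) (H : 'M[C]_N) : seq C :=
  sval (closed_field_poly_normal (char_poly H)).

(* singular values s_1 >= s_2 >= ... >= s_N of M : square roots of the
   eigenvalues of M^* M, sorted in nonincreasing order.
   sing_vals M is the list [:: s_1; ...; s_N] (0-based list indexing). *)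
Definition sing_vals (N : nat) (M : 'M[C]_N) : seq C :=
  sort (fun x y => y <= x) (map sqrtC (eigvals (adjmx M *m M))).

(* s_k(M), 1-based as in the paper *)
Definition sval_k (N : nat) (M : 'M[C]_N) (k : nat) : C :=
  nth 0 (sing_vals M) k.-1.

Definition spec_norm (N : nat) (M : 'M[C]_N) : C := sval_k M 1.

Definition mxpeval (n m : nat) (R : 'I_m.+1 -> 'M[C]_n) (l : C) : 'M[C]_n :=
  \sum_(j < m.+1) (l ^+ j) *: R j.

Definition divdiff (n m : nat) (R : 'I_m.+1 -> 'M[C]_n) (mu1 mu2 : C) : 'M[C]_n :=
  (mu1 - mu2)^-1 *: (mxpeval R mu1 - mxpeval R mu2).

Definition Fmx (n m : nat) (R : 'I_m.+1 -> 'M[C]_n) (mu1 mu2 g : C) : 'M[C]_(n + n) :=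
  block_mx (mxpeval R mu1) 0 (g *: divdiff R mu1 mu2) (mxpeval R mu2).

Definition is_mxp_eig (n m : nat) (R : 'I_m.+1 -> 'M[C]_n) (l : C) : Prop :=
  exists x : 'cV[C]_n, x != 0 /\ mxpeval R l *m x = 0.

End Defs.

(* Main.v *)
Require Import Defs.
From HB Require Import structures.
From mathcomp Require Import all_boot all_order all_algebra.
From mathcomp Require Import sesquilinear spectral zify.
Set Implicit Arguments. Unset Strict Implicit. Unset Printing Implicit Defensive.
Import Order.TTheory GRing.Theory Num.Theory.
Local Open Scope ring_scope.
Local Open Scope sesquilinear_scope.

Section S.
Variable C : numClosedFieldType.

Lemma adjmxE p q (M : 'M[C]_(p, q)) : adjmx M = M ^t*.
Proof. by rewrite /adjmx map_trmx. Qed.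

Lemma adjmxM p q r (M : 'M[C]_(p, q)) (N : 'M[C]_(q, r)) :
  adjmx (M *m N) = adjmx N *m adjmx M.
Proof. by rewrite /adjmx map_mxM trmx_mul. Qed.

Lemma adjmxK p q (M : 'M[C]_(p, q)) : adjmx (adjmx M) = M.
Proof. by rewrite !adjmxE trmxCK. Qed.

Lemma char_poly_conj N (P Am : 'M[C]_N) : P \in unitmx ->
  char_poly (invmx P *m Am *m P) = char_poly Am.
Proof.
move=> Pu; rewrite /char_poly /char_poly_mx.
set f := map_mx (@polyC C).
have e1 : f (invmx P) *m f P = 1%:M by rewrite -map_mxM mulVmx // map_mx1.
have hX : 'X%:M = f (invmx P) *m 'X%:M *m f P :> 'M[{poly C}]_N.
  by rewrite (scalar_mxC 'X (f (invmx P))) -mulmxA e1 mulmx1.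
rewrite /f !map_mxM -/f {1}hX -mulmxBl -mulmxBr !det_mulmx mulrAC -det_mulmx.
by rewrite e1 det1 mul1r.
Qed.

Lemma herm_H N (M : 'M[C]_N) : adjmx M *m M \is hermsymmx.
Proof. by apply/is_hermitianmxP; rewrite expr0 scale1r -adjmxE adjmxM adjmxK. Qed.

Lemma spec_dec N (H : 'M[C]_N) : H \is hermsymmx -> exists P : 'M_N, exists d : 'rV_N,
  [/\ adjmx P *m P = 1%:M, P *m adjmx P = 1%:M, P \in unitmx, invmx P = adjmx P & H = adjmx P *m diag_mx d *m P].
Proof.
move=> hH; have /hermitian_normalmx /orthomx_spectralP E := hH.
exists (spectralmx H), (spectral_diag H).
have Pu := spectral_unit H; have Pun := spectral_unitarymx H.
by rewrite adjmxE -invmx_unitary // mulVmx // mulmxV //; split.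
Qed.

Lemma eig_perm N (H P: 'M[C]_N) d : P \in unitmx -> H = invmx P *m diag_mx d *m P ->
  perm_eq (eigvals H) [seq d 0 i | i <- enum 'I_N].
Proof.
move=> Pu HE; rewrite /eigvals; case: closed_field_poly_normal => r /= Hr.
apply: prod_XsubC_eq.
rewrite -[LHS]scale1r -(monicP (char_poly_monic H)) -Hr HE char_poly_conj //.
rewrite char_poly_trig ?diag_mx_is_trig // big_map big_enum /=.
by apply: eq_bigr => i _; rewrite mxE eqxx mulr1n.
Qed.

Definition nsq N (v : 'cV[C]_N) : C := (adjmx v *m v) 0 0.

Lemma nsqE N (v : 'cV[C]_N) : nsq v = \sum_i `|v i 0| ^+ 2.
Proof.
rewrite /nsq mxE; apply: eq_bigr => i _.
by rewrite /adjmx !mxE normCK mulrC.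
Qed.

Lemma nsq_ge0 N (v : 'cV[C]_N) : 0 <= nsq v.
Proof. by rewrite nsqE sumr_ge0 // => i _; rewrite exprn_ge0. Qed.

Lemma nsq_eq0 N (v : 'cV[C]_N) : nsq v = 0 -> v = 0.
Proof.
rewrite nsqE => h; apply/matrixP => i j; rewrite ord1 mxE.
have := psumr_eq0P (P := predT) (fun k _ => exprn_ge0 2 (normr_ge0 (v k 0))) h (i := i) isT.
by move/eqP; rewrite expf_eq0 /= normr_eq0 => /eqP.
Qed.

Lemma quad_diag N (w : 'cV[C]_N) (d : 'rV[C]_N) :
  (adjmx w *m diag_mx d *m w) 0 0 = \sum_i d 0 i * `|w i 0| ^+ 2.
Proof.
rewrite mul_mx_diag mxE; apply: eq_bigr => i _.
by rewrite /adjmx !mxE normCK (mulrC _ (d 0 i)) -mulrA (mulrC (_^*)).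
Qed.

Lemma quadE N (M P : 'M[C]_N) (d : 'rV[C]_N) (v : 'cV[C]_N) :
  adjmx M *m M = adjmx P *m diag_mx d *m P ->
  nsq (M *m v) = \sum_i d 0 i * `|(P *m v) i 0| ^+ 2.
Proof.
move=> HE; rewrite -quad_diag /nsq adjmxM -mulmxA (mulmxA (adjmx M)) HE.
by rewrite adjmxM !mulmxA.
Qed.

Lemma nsq_unit N (P : 'M[C]_N) (v : 'cV[C]_N) : adjmx P *m P = 1%:M -> nsq (P *m v) = nsq v.
Proof. by move=> hP; rewrite /nsq adjmxM -mulmxA (mulmxA (adjmx P)) hP mul1mx. Qed.

Definition geC (x y : C) := y <= x.

Lemma sv_setup N (M : 'M[C]_N) : exists P : 'M_N, exists d : 'rV_N,
 [/\ adjmx P *m P = 1%:M, adjmx M *m M = adjmx P *m diag_mx d *m P, (forall i, 0 <= d 0 i),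
   perm_eq (sing_vals M) [seq sqrtC (d 0 i) | i <- enum 'I_N] &
   sorted geC (sing_vals M)].
Proof.
have [P [d [h1 h2 Pu hinv HE]]] := spec_dec (herm_H M).
have dge0 : forall i, 0 <= d 0 i.
  move=> i; have := quadE (adjmx P *m delta_mx i 0) HE.
  rewrite (mulmxA P) h2 mul1mx (bigD1 i) //= big1 => [|j ji]; last first.
    by rewrite mxE (negbTE ji) /= normr0 expr0n /= mulr0.
  rewrite mxE !eqxx /= normr1 expr1n mulr1 addr0 => <-.
  exact: nsq_ge0.
have Hp : perm_eq (eigvals (adjmx M *m M)) [seq d 0 i | i <- enum 'I_N].
  by apply: eig_perm Pu _; rewrite hinv.
exists P, d; split => //.
  rewrite /sing_vals perm_sort.
  by rewrite (map_comp sqrtC (fun i => d 0 i)); exact: perm_map.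
rewrite /sing_vals; apply: (sort_sorted_in (P := [pred x : C | 0 <= x])).
  move=> x y /= hx hy; rewrite /geC orbC; apply: real_leVge; exact: ger0_real.
apply/allP => x /mapP [e he ->] /=; rewrite sqrtC_ge0.
by move: he; rewrite (perm_mem Hp) => /mapP [i _ ->].
Qed.

Lemma geC_trans : transitive geC.
Proof. by move=> x y z hyx hxz; rewrite /geC (le_trans hxz hyx). Qed.
Lemma geC_refl : reflexive geC.
Proof. by move=> x; rewrite /geC lexx. Qed.

Lemma sv_size N (M : 'M[C]_N) (d : 'rV[C]_N) :
  perm_eq (sing_vals M) [seq sqrtC (d 0 i) | i <- enum 'I_N] -> size (sing_vals M) = N.
Proof. by move/perm_size ->; rewrite size_map size_enum_ord. Qed.

Lemma specn_facts N (M : 'M[C]_N) : (0 < N)%N ->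
  0 <= spec_norm M /\ forall v, nsq (M *m v) <= spec_norm M ^+ 2 * nsq v.
Proof.
move=> N0; have [P [d [h1 HE dge0 hp hs]]] := sv_setup M.
have hsz := sv_size hp.
have s1ge0 : 0 <= spec_norm M.
  have : nth 0 (sing_vals M) 0 \in sing_vals M by rewrite mem_nth // hsz.
  rewrite /spec_norm /sval_k /= (perm_mem hp) => /mapP [i _ ->].
  by rewrite sqrtC_ge0.
have dle : forall i, d 0 i <= spec_norm M ^+ 2.
  move=> i; have : sqrtC (d 0 i) \in sing_vals M.
    by rewrite (perm_mem hp); apply: map_f; rewrite mem_enum.
  move=> /(nthP 0) [k hk hkE].
  have := @sorted_leq_nth _ _ geC_trans geC_refl 0 _ hs 0%N k.
  have h0 : (0 < size (sing_vals M))%N by rewrite hsz.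
  move=> /(_ h0 hk (leq0n k)).
  rewrite /geC hkE => hle.
  rewrite -(sqrtCK (d 0 i)) /spec_norm /sval_k /= !expr2.
  by apply: ler_pM => //; rewrite sqrtC_ge0.
split => // v; rewrite (quadE v HE) -(nsq_unit v h1) nsqE mulr_sumr.
apply: ler_sum => i _; apply: ler_wpM2r => //.
exact: exprn_ge0.
Qed.

Lemma svk_bound N (M : 'M[C]_N) (c : C) (u1 u2 : 'cV[C]_N) : (1 < N)%N -> 0 <= c ->
 (forall a b, a *: u1 + b *: u2 = 0 -> a = 0 /\ b = 0) ->
 (forall a b, nsq (M *m (a *: u1 + b *: u2)) <= c ^+ 2 * nsq (a *: u1 + b *: u2)) ->
 nth 0 (sing_vals M) (N - 2) <= c.
Proof.
move=> N1 c0 hind hb; have N0 : (0 < N)%N by apply: ltnW.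
have [P [d [h1 HE dge0 hp hs]]] := sv_setup M.
have hsz := sv_size hp.
set L := sing_vals M in hp hs hsz *.
have hN2 : (N - 2 < size L)%N by rewrite hsz; lia.
have s0 : 0 <= nth 0 L (N - 2).
  have : nth 0 L (N - 2) \in L by rewrite mem_nth.
  by rewrite (perm_mem hp) => /mapP [i _ ->]; rewrite sqrtC_ge0.
case: (real_leP (ger0_real s0) (ger0_real c0)) => // hlt; exfalso.
have big1k : forall k, (k < N - 1)%N -> c < nth 0 L k.
  move=> k hk; apply: (lt_le_trans hlt).
  have hk' : (k < size L)%N by rewrite hsz (leq_trans hk) // leq_subr.
  have := @sorted_leq_nth _ _ geC_trans geC_refl 0 _ hs k (N - 2)%N.
  move=> /(_ hk' hN2); apply.
  lia.
set q := fun x : C => x <= c.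
have hc1 : (count q L <= 1)%N.
  rewrite -(cat_take_drop (N - 1) L) count_cat.
  have -> : count q (take (N - 1) L) = 0%N.
    rewrite (@eq_in_count _ _ pred0) ?count_pred0 // => x /(nthP 0) [k hk <-].
    have hk1 : (k < N - 1)%N.
      by move: hk; rewrite size_take hsz; case: ifP => h hk; lia.
    by rewrite nth_take // /q lt_geF // big1k.
  rewrite add0n (leq_trans (count_size _ _)) // size_drop hsz.
  lia.
have hcnt : forall i j : 'I_N, i != j -> q (sqrtC (d 0 i)) -> q (sqrtC (d 0 j)) -> False.
  move=> i j ij qi qj.
  pose f := fun k : 'I_N => sqrtC (d 0 k).
  have h : (count (fun k => q (f k)) (enum 'I_N) <= 1)%N.
    by rewrite -(count_map f) -(permP hp).
  have : (size [:: i; j] <= size [seq x <- enum 'I_N | q (f x)])%N.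
    apply: uniq_leq_size; first by rewrite /= inE ij.
    by move=> x; rewrite !inE mem_filter mem_enum andbT => /orP [] /eqP ->.
  by rewrite size_filter => /leq_trans /(_ h).
have key : forall i, ~~ q (sqrtC (d 0 i)) -> c ^+ 2 < d 0 i.
  move=> i hi; rewrite -(sqrtCK (d 0 i)) !expr2.
  have hci : c < sqrtC (d 0 i).
    by rewrite real_ltNge ?ger0_real ?sqrtC_ge0.
  by apply: ltr_pM.
have [i0 hi0] : exists i0 : 'I_N, forall i, i != i0 -> c ^+ 2 < d 0 i.
  case: (pickP [pred i : 'I_N | q (sqrtC (d 0 i))]) => [i0 qi0 | none].
    exists i0 => i ne; apply: key; apply/negP => qi; exact: (hcnt _ _ ne qi qi0).
  exists (Ordinal N0) => i _; apply: key; by have := none i => /= ->.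
set w1 := P *m u1; set w2 := P *m u2.
have [a [b [hab hw]]] : exists a b, ~~ ((a == 0) && (b == 0)) /\ a * w1 i0 0 + b * w2 i0 0 = 0.
  case: (boolP ((w1 i0 0 == 0) && (w2 i0 0 == 0))) => [/andP [/eqP z1 /eqP z2]| nz].
    by exists 1, 0; rewrite z1 z2 oner_eq0 /= !mulr0 addr0.
  exists (w2 i0 0), (- w1 i0 0); split; last by rewrite mulNr mulrC subrr.
  by rewrite oppr_eq0 andbC.
set v := a *: u1 + b *: u2.
have Pv : P *m v = a *: w1 + b *: w2 by rewrite mulmxDr !scalemxAr.
have Pvi0 : (P *m v) i0 0 = 0.
  by rewrite Pv -hw mxE; congr (_ + _); rewrite mxE.
have := hb a b; rewrite -/v (quadE v HE) -(nsq_unit v h1) nsqE mulr_sumr.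
rewrite -subr_le0 -sumrB => hle.
set t := fun i => d 0 i * `|(P *m v) i 0| ^+ 2 - c ^+ 2 * `|(P *m v) i 0| ^+ 2.
have tge0 : forall i, 0 <= t i.
  move=> i; rewrite /t -mulrBl; have [->|ne] := eqVneq i i0.
    by rewrite Pvi0 normr0 expr0n /= mulr0.
  by rewrite mulr_ge0 ?exprn_ge0 // subr_ge0 ltW // hi0.
have t0 : \sum_i t i = 0 by apply/le_anti; rewrite hle sumr_ge0 // => i _.
have Pv0 : P *m v = 0.
  apply/matrixP => i j; rewrite ord1 [in RHS]mxE.
  have [->|ne] := eqVneq i i0; first exact: Pvi0.
  have := psumr_eq0P (P := predT) (fun k _ => tge0 k) t0 (i := i) isT.
  rewrite /t -mulrBl => /eqP; rewrite mulf_eq0 subr_eq0 => /orP [/eqP he|].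
    by have := hi0 i ne; rewrite he ltxx.
  by rewrite expf_eq0 /= normr_eq0 => /eqP.
have v0 : v = 0 by rewrite -[v]mul1mx -h1 -mulmxA Pv0 mulmx0.
have [a0 b0] := hind a b v0.
by move: hab; rewrite a0 b0 eqxx.
Qed.

Lemma nsqN N (w : 'cV[C]_N) : nsq (- w) = nsq w.
Proof. by rewrite !nsqE; apply: eq_bigr => i _; rewrite mxE normrN. Qed.

Lemma mxpeval_add n m (A D : 'I_m.+1 -> 'M[C]_n) l :
  mxpeval (fun j => A j + D j) l = mxpeval A l + mxpeval D l.
Proof. by rewrite /mxpeval -big_split; apply: eq_bigr => j _; rewrite scalerDr. Qed.

Lemma Fmx_add n m (A D : 'I_m.+1 -> 'M[C]_n) mu1 mu2 g :
  Fmx (fun j => A j + D j) mu1 mu2 g = Fmx A mu1 mu2 g + Fmx D mu1 mu2 g.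
Proof.
rewrite /Fmx /divdiff !mxpeval_add add_block_mx addr0; congr block_mx.
by rewrite -scalerDr -scalerDr opprD addrACA.
Qed.
End S.

Unset Implicit Arguments.
Theorem lemma2 (C : numClosedFieldType) (n m : nat)
    (A D : 'I_m.+1 -> 'M[C]_n) (mu1 mu2 : C) :
  mu1 != mu2 ->
  is_mxp_eig (fun j => A j + D j) mu1 ->
  is_mxp_eig (fun j => A j + D j) mu2 ->
  forall g : C, g != 0 ->
  sval_k (Fmx A mu1 mu2 g) (2 * n - 1)%N <= spec_norm (Fmx D mu1 mu2 g).
Proof.
move=> hmu [x1 [x1n hx1]] [x2 [x2n hx2]] g gn.
have n0 : (0 < n)%N.
  case: n A D x1 x1n hx1 x2 x2n hx2 => // A D x1 x1n.
  by move: x1n; rewrite flatmx0 eqxx.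
have N0 : (0 < n + n)%N by lia.
have [c0 hD] := specn_facts (Fmx D mu1 mu2 g) N0.
set Q := fun j => A j + D j in hx1 hx2.
set k := g / (mu1 - mu2).
set u1 : 'cV[C]_(n + n) := col_mx 0 x2.
set u2 : 'cV[C]_(n + n) := col_mx x1 (k *: x1).
have hu1 : Fmx Q mu1 mu2 g *m u1 = 0.
  by rewrite /Fmx mul_block_col !mulmx0 !mul0mx hx2 !addr0 col_mx0.
have hu2 : Fmx Q mu1 mu2 g *m u2 = 0.
  rewrite /Fmx mul_block_col mul0mx addr0 hx1 /divdiff -!scalemxAl mulmxBl hx1.
  by rewrite -scalemxAr sub0r !scalerN scalerA addNr col_mx0.
have hker : forall a b, Fmx Q mu1 mu2 g *m (a *: u1 + b *: u2) = 0.
  by move=> a b; rewrite mulmxDr -!scalemxAr hu1 hu2 !scaler0 addr0.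
have hind : forall a b, a *: u1 + b *: u2 = 0 -> a = 0 /\ b = 0.
  move=> a b; rewrite !scale_col_mx add_col_mx => /eqP; rewrite col_mx_eq0.
  rewrite scaler0 add0r scalemx_eq0 (negbTE x1n) orbF => /andP [/eqP b0].
  rewrite b0 scale0r addr0 scalemx_eq0 (negbTE x2n) orbF => /eqP a0.
  by [].
have hb : forall a b, nsq (Fmx A mu1 mu2 g *m (a *: u1 + b *: u2)) <=
    spec_norm (Fmx D mu1 mu2 g) ^+ 2 * nsq (a *: u1 + b *: u2).
  move=> a b; have := hker a b; rewrite /Q Fmx_add mulmxDl => /eqP.
  by rewrite addr_eq0 => /eqP ->; rewrite nsqN.
have := svk_bound (ltac:(lia) : (1 < n + n)%N) c0 hind hb.
by rewrite /sval_k; have -> : ((2 * n - 1).-1 = n + n - 2)%N by lia.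
Qed.
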